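(* Let $(r,t,s)$ be a vertex of the Farey tree $\mathrm{F}\mathbb T$ with $t\in(0,\infty)\cap\mathbb Q$. Then: (1) If $r=\frac01$ and $s\neq\frac10$, and the symmetric decomposition of $\omega_s$ is $w\alpha w^{-1}$, then $\omega_t=yz\,w\alpha^{-1}w^{-1}$. (2) If $r\neq\frac01$ and $s=\frac10$, and the symmetric decomposition of $\omega_r$ is $u\beta u^{-1}$, then $\omega_t=u\beta^{-1}u^{-1}\,xy$. (3) If $r\neq\frac01$ and $s\neq\frac10$, and the symmetric decompositions of $\omega_r$ and $\omega_s$ are $u\beta u^{-1}$ and $w\alpha w^{-1}$ respectively, then $\omega_t=u\beta^{-1}u^{-1}\,xyz\,w\alpha^{-1}w^{-1}$. All equalities are equalities of words.
   Context: Farey tree $\mathrm{F}\mathbb T$: rooted planar binary tree with root $(\frac01,\frac11,\frac10)$, and each vertex $(\frac ab,\frac cd,\frac ef)$ has left child $(\frac ab,\frac{a+c}{b+d},\frac cd)$ and right child $(\frac cd,\frac{c+e}{d+f},\frac ef)$; $\frac10$ represents $\infty$. Modified lattice: the planar graph with vertex set $\mathbb Z^2$ whose edges are the horizontal unit segments, the vertical unit segments, and the diagonal segments of slope $-1$ joining $(i,j+1)$ and $(i+1,j)$. Words $\omega_t$: $\omega_{0/1}=x$, $\omega_{1/0}=z$. For reduced $t=p/q\in(0,\infty)$, let $L_t$ be the segment from $(0,0)$ to $(q,p)$, oriented from $(0,0)$ to $(q,p)$. List the edges whose relative interior meets $L_t$, in the order of the intersection points along $L_t$. A horizontal (resp.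 diagonal, vertical) edge contributes $x$ (resp. $y$, $z$) if its midpoint is not on the right-hand side of $L_t$ (including lying on $L_t$), and $x^{-1}$ (resp. $y^{-1}$, $z^{-1}$) if its midpoint is on the right-hand side. $\omega_t$ is the concatenation of these letters. Symmetric decomposition: every $\omega_t$ can be written as a word $w\alpha w^{-1}$ with $w$ a word and $\alpha\in\{x,y,z\}$ a letter; this expression is called the symmetric decomposition of $\omega_t$. *)

(* Defs.v *)
From HB Require Import structures.
From mathcomp Require Import all_boot all_order all_algebra.
Set Implicit Arguments. Unset Strict Implicit. Unset Printing Implicit Defensive.
Import Order.TTheory GRing.Theory Num.Theory.

(* A fraction a/b is the pair (a, b) (numerator, denominator); 1/0 = infinity. *)
Definition fracp := (nat * nat)%type.
Definition vertex := (fracp * fracp * fracp)%type.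

Definition mediant (f g : fracp) : fracp := (f.1 + g.1, f.2 + g.2)%N.

Definition farey_root : vertex := ((0, 1), (1, 1), (1, 0))%N.

Definition left_child (v : vertex) : vertex :=
  let: (a, c, e) := v in (a, mediant a c, c).
Definition right_child (v : vertex) : vertex :=
  let: (a, c, e) := v in (c, mediant c e, e).

Definition farey_at (path : seq bool) : vertex :=
  foldl (fun v b => if b then right_child v else left_child v) farey_root path.

Definition is_farey_vertex (v : vertex) : Prop := exists path, farey_at path = v.

Inductive gen := gx | gy | gz.
Definition gen_eqb (a b : gen) : bool :=
  match a, b with gx, gx | gy, gy | gz, gz => true | _, _ => false end.
Lemma gen_eqP : Equality.axiom gen_eqb.
Proof. by case; case; constructor. Qed.
HB.instance Definition _ := hasDecEq.Build gen gen_eqP.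
(* a letter: (generator, inverted?) ; (g, false) = g, (g, true) = g^{-1} *)
Definition letter := (gen * bool)%type.
Definition word := seq letter.
Definition inv_letter (l : letter) : letter := (l.1, ~~ l.2).
Definition winv (w : word) : word := rev (map inv_letter w).

(* An edge is (kind, (i, j)):
   (gx, (i,j)) : horizontal edge (i,j)--(i+1,j)
   (gy, (i,j)) : diagonal edge   (i,j+1)--(i+1,j)
   (gz, (i,j)) : vertical edge   (i,j)--(i,j+1)                       *)
Definition edge := (gen * (int * int))%type.

Local Open Scope ring_scope.

Definition edge_ends (e : edge) : (int * int) * (int * int) :=
  let: (k, (i, j)) := e in
  match k with
  | gx => ((i, j), (i + 1, j))
  | gy => ((i, j + 1), (i + 1, j))
  | gz => ((i, j), (i, j + 1))
  end.

(* L_t for t = p/q is the segment lam * (q, p), lam in [0,1].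
   [hits p q e lam] : the point lam*(q,p) of L_t lies in the relative
   interior of the edge e. *)
Definition hits (p q : nat) (e : edge) (lam : rat) : Prop :=
  let: ((x0, y0), (x1, y1)) := edge_ends e in
  exists mu : rat, [/\ 0 <= lam <= 1, 0 < mu < 1,
      lam * q%:R = x0%:~R + mu * (x1 - x0)%:~R &
      lam * p%:R = y0%:~R + mu * (y1 - y0)%:~R].

Definition meets (p q : nat) (e : edge) : Prop := exists lam, hits p q e lam.

(* The letter contributed by an edge: its kind, inverted iff the midpoint
   m of the edge is strictly on the right-hand side of L_t oriented from
   (0,0) to (q,p), i.e. det((q,p), m) < 0; we use 2m to stay in int. *)
Definition edge_letter (p q : nat) (e : edge) : letter :=
  let: ((x0, y0), (x1, y1)) := edge_ends e in
  (e.1, (q%:Z * (y0 + y1) - p%:Z * (x0 + x1) < 0)).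

Definition is_omega (t : fracp) (W : word) : Prop :=
  let p := t.1 in let q := t.2 in
  exists es : seq edge,
    [/\ (forall e, e \in es <-> meets p q e),
        (forall (i j : nat) (li lj : rat) (e0 : edge),
            (i < j < size es)%N ->
            hits p q (nth e0 es i) li -> hits p q (nth e0 es j) lj -> li < lj) &
        W = map (edge_letter p q) es].

(* Main.v *)
Require Import Defs.
From mathcomp Require Import all_boot all_order all_algebra.
From mathcomp Require Import zify ring lra.
Import Order.TTheory GRing.Theory Num.Theory.

Local Open Scope ring_scope.

Definition dt (P Q X Y : int) : int := Y*Q - X*P.
Definition num (e : edge) : int :=
  let: (k, (i, j)) := e in match k with gx => j | gz => i | gy => i + j + 1 end.
Definition den (P Q : int) (k : gen) : int :=
  match k with gx => P | gz => Q | gy => P + Q end.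
Definition mZ (P Q : int) (e : edge) : bool :=
  let: (k, (i, j)) := e in match k with
  | gx => (0 <= j <= P) && (0 < dt P Q i j) && (dt P Q (i+1) j < 0)
  | gz => (0 <= i <= Q) && (dt P Q i j < 0) && (0 < dt P Q i (j+1))
  | gy => (0 <= i+j+1 <= P+Q) && (0 < dt P Q i (j+1)) && (dt P Q (i+1) j < 0)
  end.

Lemma dt_addX P Q X Y x : dt P Q (X + x) Y = dt P Q X Y - x * P.
Proof. rewrite /dt; ring. Qed.
Lemma dt_addY P Q X Y y : dt P Q X (Y + y) = dt P Q X Y + y * Q.
Proof. rewrite /dt; ring. Qed.

Lemma num_range P Q e : 0 < P -> 0 < Q -> mZ P Q e -> 0 < num e < den P Q e.1.
Proof.
case: e => [[] [i j]] /= hP hQ; rewrite /dt.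
- case/andP=> [/andP[/andP[h1 h2] h3] h4].
  have : j != 0.
    apply/eqP=> ej; subst j; rewrite mul0r add0r in h3 h4.
    have : i < 0 by nia.
    have : -1 < i by nia.
    lia.
  have : j != P.
    apply/eqP=> ej; subst j.
    have : i < Q by nia.
    have : Q < i + 1 by nia.
    lia.
  lia.
- case/andP=> [/andP[/andP[h1 h2] h3] h4].
  have : i + j + 1 != 0.
    apply/eqP=> ej; have ej' : j = - i - 1 by lia. subst j.
    have : i * (P + Q) < 0 by nia.
    have : 0 < (i + 1) * (P + Q) by nia.
    rewrite pmulr_llt0 ?pmulr_lgt0; lia.
  have : i + j + 1 != P + Q.
    apply/eqP=> ej; have ej' : j = P + Q - i - 1 by lia. subst j.
    have : 0 < (Q - i) * (P + Q) by nia.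
    have : (Q - i - 1) * (P + Q) < 0 by nia.
    rewrite pmulr_llt0 ?pmulr_lgt0; lia.
  lia.
- case/andP=> [/andP[/andP[h1 h2] h3] h4].
  have : i != 0.
    apply/eqP=> ej; subst i.
    have : j < 0 by nia.
    have : -1 < j by nia.
    lia.
  have : i != Q.
    apply/eqP=> ej; subst i.
    have : j < P by nia.
    have : P < j + 1 by nia.
    lia.
  lia.
Qed.

Local Open Scope ring_scope.

Definition fcond (A B C D : int) := [/\ 0 <= A, 0 <= B, 0 <= C, 0 <= D & B*C - A*D = 1].
Definition cutL (P Q A : int) e := num e * P < A * den P Q e.1.
Definition cutR (P Q B : int) e := B * den P Q e.1 < num e * Q.

Lemma dtT (A B C D X Y : int) : dt (A+C) (B+D) X Y = dt A B X Y - (X*C - Y*D).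
Proof. rewrite /dt; ring. Qed.
Lemma dtS (C D X Y : int) : dt C D X Y = - (X*C - Y*D).
Proof. rewrite /dt; ring. Qed.

Lemma uvX (A B C D i j : int) : B*C - A*D = 1 -> i = D*(j*B - i*A) + B*(i*C - j*D).
Proof. move=> H; have -> : D*(j*B - i*A) + B*(i*C - j*D) = i*(B*C - A*D) by ring. by rewrite H mulr1. Qed.
Lemma uvY (A B C D i j : int) : B*C - A*D = 1 -> j = C*(j*B - i*A) + A*(i*C - j*D).
Proof. move=> H; have -> : C*(j*B - i*A) + A*(i*C - j*D) = j*(B*C - A*D) by ring. by rewrite H mulr1. Qed.

Ltac uvsub i j A B C D H :=
  let U := fresh "U" in let V := fresh "V" in
  move: (uvX A B C D i j H) (uvY A B C D i j H); rewrite /dt;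
  set U := j*B - i*A; set V := i*C - j*D; clearbody U V;
  let hx := fresh "hx" in let hy := fresh "hy" in
  move=> hx hy; rewrite ?hx ?hy; clear hx hy.

Lemma Rlam (A B C D : int) e : fcond A B C D -> 1 <= A ->
  cutL (A+C) (B+D) A e = (num e < den A B e.1).
Proof.
case=> hA hB hC hD H hA1; have hC1 : 1 <= C by nia.
case: e => [[] [i j]]; rewrite /cutL /=.
- by rewrite ltr_pM2r //; lia.
- apply/idP/idP; nia.
- apply/idP/idP; nia.
Qed.

Lemma R1 (A B C D : int) e : fcond A B C D -> 1 <= A ->
  mZ A B e = mZ (A+C) (B+D) e && cutL (A+C) (B+D) A e.
Proof.
move=> F hA1; rewrite Rlam //.
case: F => hA hB hC hD H; have hC1 : 1 <= C by nia.
have hB1 : 1 <= B by nia.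
apply/idP/idP.
- move=> h; have := @num_range A B _ (ltac:(lia)) (ltac:(lia)) h.
  move: h; case: e => [[] [i j]] /=; rewrite ?dt_addX ?dt_addY ?(dtT A B C D).
  + uvsub i j A B C D H. nia.
  + uvsub i j A B C D H. nia.
  + uvsub i j A B C D H. nia.
- case/andP=> h hl.
  have := @num_range (A + C) (B + D) _ (ltac:(lia)) (ltac:(lia)) h.
  move: h hl; case: e => [[] [i j]] /=; rewrite ?dt_addX ?dt_addY ?(dtT A B C D).
  + uvsub i j A B C D H. nia.
  + uvsub i j A B C D H. nia.
  + uvsub i j A B C D H. nia.
Qed.

Definition shift (B A : int) (e : edge) : edge := (e.1, (e.2.1 + B, e.2.2 + A)).

Lemma Slam (A B C D : int) e : fcond A B C D -> 1 <= D ->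
  cutR (A+C) (B+D) B (shift B A e) = (0 < num e).
Proof.
case=> hA hB hC hD H hD1; have hB1 : 1 <= B by nia.
case: e => [[] [i j]]; rewrite /cutR /=.
- apply/idP/idP; nia.
- apply/idP/idP; nia.
- rewrite ltr_pM2r; lia.
Qed.

Lemma S1 (A B C D : int) e : fcond A B C D -> 1 <= D ->
  mZ C D e = mZ (A+C) (B+D) (shift B A e) && cutR (A+C) (B+D) B (shift B A e).
Proof.
move=> F hD1; rewrite Slam //.
case: F => hA hB hC hD H; have hC1 : 1 <= C by nia.
have hB1 : 1 <= B by nia.
apply/idP/idP.
- move=> h; have := @num_range C D _ (ltac:(lia)) (ltac:(lia)) h.
  move: h; case: e => [[] [i j]] /=; rewrite ?dt_addX ?dt_addY ?(dtT A B C D) ?(dtS C D).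
  + uvsub i j A B C D H. nia.
  + uvsub i j A B C D H. nia.
  + uvsub i j A B C D H. nia.
- case/andP=> h hl.
  have := @num_range (A + C) (B + D) _ (ltac:(lia)) (ltac:(lia)) h.
  move: h hl; case: e => [[] [i j]] /=; rewrite ?dt_addX ?dt_addY ?(dtT A B C D) ?(dtS C D).
  + uvsub i j A B C D H. nia.
  + uvsub i j A B C D H. nia.
  + uvsub i j A B C D H. nia.
Qed.

Definition inmid (A B D : int) (e : edge) : bool :=
  match e.1 with
  | gx => (1 <= A) && (e.2 == (B-1, A))
  | gy => e.2 == (B-1, A)
  | gz => (1 <= D) && (e.2 == (B, A))
  end.

Lemma Mid (A B C D : int) e : fcond A B C D ->
  mZ (A+C) (B+D) e && ~~ cutL (A+C) (B+D) A e && ~~ cutR (A+C) (B+D) B e = inmid A B D e.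
Proof.
case=> hA hB hC hD H; have hC1 : 1 <= C by nia.
have hB1 : 1 <= B by nia.
case: e => [[] [i j]]; rewrite /cutL /cutR /inmid /= xpair_eqE; apply/idP/idP.
- case/andP=> [/andP[h1 h2] h3].
  have := @num_range (A + C) (B + D) (gx, (i, j)) (ltac:(lia)) (ltac:(lia)) h1.
  move: h1 h2 h3; rewrite /= /dt => h1 h2 h3 h4.
  have ej : j = A by nia.
  subst j. have ei : i = B - 1 by nia.
  subst i. apply/andP; split; [lia| by rewrite !eqxx].
- case/andP=> [h0 /andP[/eqP-> /eqP->]] /=; rewrite /dt; nia.
- case/andP=> [/andP[h1 h2] h3].
  have := @num_range (A + C) (B + D) (gy, (i, j)) (ltac:(lia)) (ltac:(lia)) h1.
  move: h1 h2 h3; rewrite /= /dt => h1 h2 h3 h4.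
  have ej : i + j + 1 = A + B by nia.
  have ei : i = B - 1 by nia.
  have ej' : j = A by lia.
  subst i j. by rewrite !eqxx.
- case/andP=> [/eqP-> /eqP->] /=; rewrite /dt; nia.
- case/andP=> [/andP[h1 h2] h3].
  have := @num_range (A + C) (B + D) (gz, (i, j)) (ltac:(lia)) (ltac:(lia)) h1.
  move: h1 h2 h3; rewrite /= /dt => h1 h2 h3 h4.
  have ei : i = B by nia.
  subst i. have ej : j = A by nia.
  subst j. apply/andP; split; [nia| by rewrite !eqxx].
- case/andP=> [h1 /andP[/eqP-> /eqP->]] /=; rewrite /dt; nia.
Qed.

Definition Dv (P Q : int) (e : edge) : int :=
  let: (k, (i, j)) := e in match k with
  | gx => dt P Q i j + dt P Q (i+1) j
  | gz => dt P Q i j + dt P Q i (j+1)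
  | gy => dt P Q i (j+1) + dt P Q (i+1) j
  end.

Lemma Rlet (A B C D : int) e : fcond A B C D -> 1 <= A -> mZ A B e ->
  (Dv (A+C) (B+D) e < 0) = (Dv A B e <= 0).
Proof.
move=> F hA1; case: F => hA hB hC hD H; have hC1 : 1 <= C by nia.
have hB1 : 1 <= B by nia.
move=> h; have := @num_range A B _ (ltac:(lia)) (ltac:(lia)) h.
move: h; case: e => [[] [i j]] /=; rewrite ?dt_addX ?dt_addY ?(dtT A B C D).
+ uvsub i j A B C D H. move=> h1 h2; apply/idP/idP; nia.
+ uvsub i j A B C D H. move=> h1 h2; apply/idP/idP; nia.
+ uvsub i j A B C D H. move=> h1 h2; apply/idP/idP; nia.
Qed.

Lemma Slet (A B C D : int) e : fcond A B C D -> 1 <= D -> mZ C D e ->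
  (Dv (A+C) (B+D) (shift B A e) < 0) = (Dv C D e <= 0).
Proof.
move=> F hD1; case: F => hA hB hC hD H; have hC1 : 1 <= C by nia.
have hB1 : 1 <= B by nia.
move=> h; have := @num_range C D _ (ltac:(lia)) (ltac:(lia)) h.
move: h; case: e => [[] [i j]] /=; rewrite ?dt_addX ?dt_addY ?(dtT A B C D) ?(dtS C D).
+ uvsub i j A B C D H. move=> h1 h2; apply/idP/idP; nia.
+ uvsub i j A B C D H. move=> h1 h2; apply/idP/idP; nia.
+ uvsub i j A B C D H. move=> h1 h2; apply/idP/idP; nia.
Qed.

Lemma Mlet (A B C D : int) e : fcond A B C D -> inmid A B D e ->
  (Dv (A+C) (B+D) e < 0) = false.
Proof.
case=> hA hB hC hD H; have hC1 : 1 <= C by nia.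
have hB1 : 1 <= B by nia.
case: e => [[] [i j]]; rewrite /inmid /= xpair_eqE /dt.
- case/andP=> [h0 /andP[/eqP-> /eqP->]]; apply/negbTE; nia.
- case/andP=> [/eqP-> /eqP->]; apply/negbTE; nia.
- case/andP=> [h0 /andP[/eqP-> /eqP->]]; apply/negbTE; nia.
Qed.

Lemma GR (A B C D : int) X Y : fcond A B C D -> 1 <= A -> 0 <= Y < A ->
  ((dt A B X Y < 0) = (dt (A+C) (B+D) X Y < 0)) /\ ((0 < dt A B X Y) = (0 < dt (A+C) (B+D) X Y)).
Proof.
case=> hA hB hC hD H hA1; rewrite (dtT A B C D); move: X Y.
move=> i j; uvsub i j A B C D H. move=> h; split; apply/idP/idP; nia.
Qed.

Lemma GRx (A B C D : int) X Y : fcond A B C D -> 0 <= X < B ->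
  ((dt A B X Y < 0) = (dt (A+C) (B+D) X Y < 0)) /\ ((0 < dt A B X Y) = (0 < dt (A+C) (B+D) X Y)).
Proof.
case=> hA hB hC hD H; rewrite (dtT A B C D); move: X Y.
move=> i j; uvsub i j A B C D H. move=> h; split; apply/idP/idP; nia.
Qed.

Lemma GS (A B C D : int) X Y : fcond A B C D -> 1 <= Y < C ->
  ((dt C D X Y < 0) = (dt (A+C) (B+D) (X+B) (Y+A) < 0)) /\
  ((0 < dt C D X Y) = (0 < dt (A+C) (B+D) (X+B) (Y+A))).
Proof.
case=> hA hB hC hD H; rewrite dt_addX dt_addY (dtT A B C D) (dtS C D); move: X Y.
move=> i j; uvsub i j A B C D H. move=> h; split; apply/idP/idP; nia.
Qed.

Lemma GSx (A B C D : int) X Y : fcond A B C D -> 1 <= X < D ->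
  ((dt C D X Y < 0) = (dt (A+C) (B+D) (X+B) (Y+A) < 0)) /\
  ((0 < dt C D X Y) = (0 < dt (A+C) (B+D) (X+B) (Y+A))).
Proof.
case=> hA hB hC hD H; rewrite dt_addX dt_addY (dtT A B C D) (dtS C D); move: X Y.
move=> i j; uvsub i j A B C D H. move=> h; split; apply/idP/idP; nia.
Qed.

Definition ltZ (P Q : int) (e1 e2 : edge) := num e1 * den P Q e2.1 < num e2 * den P Q e1.1.

Lemma Rord (A B C D : int) e1 e2 : fcond A B C D -> 1 <= A ->
  mZ A B e1 -> mZ A B e2 -> ltZ A B e1 e2 -> ltZ (A+C) (B+D) e1 e2.
Proof.
move=> F hA1; have F' := F; case: F' => hA hB hC hD H; have hC1 : 1 <= C by nia.
have hB1 : 1 <= B by nia.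
move=> h1 h2; have := @num_range A B _ (ltac:(lia)) (ltac:(lia)) h1.
have := @num_range A B _ (ltac:(lia)) (ltac:(lia)) h2.
clear h1 h2; rewrite /ltZ.
case: e1 => [k1 [i1 j1]]; case: e2 => [k2 [i2 j2]].
case: k1; case: k2 => /= r2 r1 hl.
- nia.
- have [g _] := GR _ _ _ _ (i2 + j2 + 1 - j1) j1 F hA1 (ltac:(lia) : 0 <= j1 < A).
  have h : dt A B (i2 + j2 + 1 - j1) j1 < 0 by rewrite /dt; nia.
  rewrite g /dt in h; nia.
- have [g _] := GR _ _ _ _ i2 j1 F hA1 (ltac:(lia) : 0 <= j1 < A).
  have h : dt A B i2 j1 < 0 by rewrite /dt; nia.
  rewrite g /dt in h; nia.
- have [_ g] := GR _ _ _ _ (i1 + j1 + 1 - j2) j2 F hA1 (ltac:(lia) : 0 <= j2 < A).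
  have h : 0 < dt A B (i1 + j1 + 1 - j2) j2 by rewrite /dt; nia.
  rewrite g /dt in h; nia.
- nia.
- have [g _] := GRx _ _ _ _ i2 (i1 + j1 + 1 - i2) F (ltac:(lia) : 0 <= i2 < B).
  have h : dt A B i2 (i1 + j1 + 1 - i2) < 0 by rewrite /dt; nia.
  rewrite g /dt in h; nia.
- have [_ g] := GRx _ _ _ _ i1 j2 F (ltac:(lia) : 0 <= i1 < B).
  have h : 0 < dt A B i1 j2 by rewrite /dt; nia.
  rewrite g /dt in h; nia.
- have [_ g] := GRx _ _ _ _ i1 (i2 + j2 + 1 - i1) F (ltac:(lia) : 0 <= i1 < B).
  have h : 0 < dt A B i1 (i2 + j2 + 1 - i1) by rewrite /dt; nia.
  rewrite g /dt in h; nia.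
- nia.
Qed.

Lemma Sord (A B C D : int) e1 e2 : fcond A B C D -> 1 <= D ->
  mZ C D e1 -> mZ C D e2 -> ltZ C D e1 e2 -> ltZ (A+C) (B+D) (shift B A e1) (shift B A e2).
Proof.
move=> F hD1; have F' := F; case: F' => hA hB hC hD H; have hC1 : 1 <= C by nia.
have hB1 : 1 <= B by nia.
move=> h1 h2; have := @num_range C D _ (ltac:(lia)) (ltac:(lia)) h1.
have := @num_range C D _ (ltac:(lia)) (ltac:(lia)) h2.
clear h1 h2; rewrite /ltZ.
case: e1 => [k1 [i1 j1]]; case: e2 => [k2 [i2 j2]].
case: k1; case: k2 => /= r2 r1 hl.
- nia.
- have [g _] := GS _ _ _ _ (i2 + j2 + 1 - j1) j1 F (ltac:(lia) : 1 <= j1 < C).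
  have h : dt C D (i2 + j2 + 1 - j1) j1 < 0 by rewrite /dt; nia.
  rewrite g /dt in h; nia.
- have [g _] := GS _ _ _ _ i2 j1 F (ltac:(lia) : 1 <= j1 < C).
  have h : dt C D i2 j1 < 0 by rewrite /dt; nia.
  rewrite g /dt in h; nia.
- have [_ g] := GS _ _ _ _ (i1 + j1 + 1 - j2) j2 F (ltac:(lia) : 1 <= j2 < C).
  have h : 0 < dt C D (i1 + j1 + 1 - j2) j2 by rewrite /dt; nia.
  rewrite g /dt in h; nia.
- nia.
- have [g _] := GSx _ _ _ _ i2 (i1 + j1 + 1 - i2) F (ltac:(lia) : 1 <= i2 < D).
  have h : dt C D i2 (i1 + j1 + 1 - i2) < 0 by rewrite /dt; nia.
  rewrite g /dt in h; nia.
- have [_ g] := GSx _ _ _ _ i1 j2 F (ltac:(lia) : 1 <= i1 < D).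
  have h : 0 < dt C D i1 j2 by rewrite /dt; nia.
  rewrite g /dt in h; nia.
- have [_ g] := GSx _ _ _ _ i1 (i2 + j2 + 1 - i1) F (ltac:(lia) : 1 <= i1 < D).
  have h : 0 < dt C D i1 (i2 + j2 + 1 - i1) by rewrite /dt; nia.
  rewrite g /dt in h; nia.
- nia.
Qed.

Definition refl (A B : int) (e : edge) : edge :=
  let: (k, (i, j)) := e in match k with
  | gx => (gx, (B-1-i, A-j))
  | gz => (gz, (B-i, A-1-j))
  | gy => (gy, (B-1-i, A-1-j))
  end.

Lemma refl_kind A B e : (refl A B e).1 = e.1.
Proof. by case: e => [[] [i j]]. Qed.

Lemma reflK A B e : refl A B (refl A B e) = e.
Proof.
case: e => [[] [i j]] /=; congr (_, (_, _)); ring.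
Qed.

Lemma mZ_refl (A B : int) e : mZ A B (refl A B e) = mZ A B e.
Proof.
case: e => [[] [i j]]; rewrite /= /dt; apply/idP/idP; lia.
Qed.

Lemma num_refl (A B : int) e : num (refl A B e) = den A B e.1 - num e.
Proof. case: e => [[] [i j]] /=; ring. Qed.

Lemma ltZ_refl (A B : int) e1 e2 : ltZ A B (refl A B e1) (refl A B e2) = ltZ A B e2 e1.
Proof.
rewrite /ltZ !num_refl !refl_kind; apply/idP/idP; nia.
Qed.

Lemma Dv_refl (A B : int) e : Dv A B (refl A B e) = - Dv A B e.
Proof. case: e => [[] [i j]]; rewrite /= /dt; ring. Qed.

Lemma den_pos (P Q : int) k : 0 < P -> 0 < Q -> 0 < den P Q k.
Proof. by case: k => /= *; lia. Qed.

Lemma ltZ_trans (P Q : int) : 0 < P -> 0 < Q -> transitive (ltZ P Q).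
Proof.
move=> hP hQ y x z; rewrite /ltZ => h1 h2.
have d1 := den_pos P Q y.1 hP hQ; have d2 := den_pos P Q x.1 hP hQ; have d3 := den_pos P Q z.1 hP hQ.
nia.
Qed.

Lemma ltZ_irr (P Q : int) : irreflexive (ltZ P Q).
Proof. by move=> x; rewrite /ltZ ltxx. Qed.

Lemma frac_lt (n1 d1 n2 d2 a b c e : int) : 0 < d1 -> 0 < d2 -> 0 < b -> 0 < e ->
  n1 * b < a * d1 -> a * e <= c * b -> c * d2 <= n2 * e -> n1 * d2 < n2 * d1.
Proof.
move=> h1 h2 hb he k1 k2 k3.
have s1 : (n1 * b) * (e * d2) < (a * d1) * (e * d2) by rewrite ltr_pM2r ?mulr_gt0.
have s2 : (a * e) * (d1 * d2) <= (c * b) * (d1 * d2) by rewrite ler_pM2r ?mulr_gt0.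
have s3 : (c * d2) * (b * d1) <= (n2 * e) * (b * d1) by rewrite ler_pM2r ?mulr_gt0.
have : (n1 * d2) * (b * e) < (n2 * d1) * (b * e).
  have -> : (n1 * d2) * (b * e) = (n1 * b) * (e * d2) by ring.
  have -> : (n2 * d1) * (b * e) = (n2 * e) * (b * d1) by ring.
  have E1 : (a * d1) * (e * d2) = (a * e) * (d1 * d2) by ring.
  have E2 : (c * b) * (d1 * d2) = (c * d2) * (b * d1) by ring.
  rewrite E1 in s1; rewrite E2 in s2.
  exact: (lt_le_trans s1 (le_trans s2 s3)).
by rewrite ltr_pM2r ?mulr_gt0.
Qed.

Local Open Scope ring_scope.

Lemma castP (n : nat) : ((n%:Z)%:~R : rat) = n%:R.
Proof. by []. Qed.

Lemma hits_gx (p q : nat) (i j : int) lam : (0 < p)%N -> (0 < q)%N ->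
  hits p q (gx, (i, j)) lam <->
  [/\ 0 <= j <= p, i * p < j * q, j * q < (i+1) * p & lam * p%:R = j%:~R].
Proof.
move=> hp hq; rewrite /hits /=.
have e1 : i + 1 - i = 1 by ring.
have e2 : j - j = 0 by ring.
rewrite e1 e2 rmorph0 rmorph1.
have P0 : (0 : rat) < p%:R by rewrite ltr0n.
have Q0 : (0 : rat) < q%:R by rewrite ltr0n.
split.
- case=> mu [/andP[l0 l1] /andP[m0 m1] E1 E2].
  rewrite mulr1 in E1; rewrite mulr0 addr0 in E2.
  have Emu : mu * p%:R = j%:~R * q%:R - i%:~R * p%:R.
    by rewrite -E2 (_ : mu = lam * q%:R - i%:~R); [ring | rewrite E1; ring].
  split => //.
  + apply/andP; split; rewrite -(ler_int rat) ?rmorph0 ?castP -E2; nra.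
  + by rewrite -(ltr_int rat) !intrM castP -subr_gt0 -Emu mulr_gt0.
  + rewrite -(ltr_int rat) !intrM intrD rmorph1 castP -subr_gt0.
    have -> : (i%:~R + 1) * p%:R - j%:~R * q%:R = (1 - mu) * p%:R :> rat.
      by rewrite mulrBl Emu; ring.
    by rewrite mulr_gt0 // subr_gt0.
- case=> /andP[j0 jp] h1 h2 E.
  have j0' : 0 <= j%:~R :> rat by rewrite ler0z.
  have jp' : j%:~R <= p%:R :> rat by rewrite -castP ler_int.
  have h1' : i%:~R * p%:R < j%:~R * q%:R :> rat by rewrite -!castP -!intrM ltr_int.
  have h2' : j%:~R * q%:R < (i + 1)%:~R * p%:R :> rat.
    by rewrite -!castP -!intrM ltr_int.
  rewrite intrD rmorph1 in h2'.
  exists (lam * q%:R - i%:~R).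
  rewrite mulr0 addr0 mulr1; split => //; last by ring.
  + apply/andP; split; nra.
  + apply/andP; split; nra.
Qed.

Lemma hits_gz (p q : nat) (i j : int) lam : (0 < p)%N -> (0 < q)%N ->
  hits p q (gz, (i, j)) lam <->
  [/\ 0 <= i <= q, j * q < i * p, i * p < (j+1) * q & lam * q%:R = i%:~R].
Proof.
move=> hp hq; rewrite /hits /=.
have e1 : j + 1 - j = 1 by ring.
have e2 : i - i = 0 by ring.
rewrite e1 e2 rmorph0 rmorph1.
have P0 : (0 : rat) < p%:R by rewrite ltr0n.
have Q0 : (0 : rat) < q%:R by rewrite ltr0n.
split.
- case=> mu [/andP[l0 l1] /andP[m0 m1] E1 E2].
  rewrite mulr1 in E2; rewrite mulr0 addr0 in E1.
  have Emu : mu * q%:R = i%:~R * p%:R - j%:~R * q%:R.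
    by rewrite -E1 (_ : mu = lam * p%:R - j%:~R); [ring | rewrite E2; ring].
  split => //.
  + apply/andP; split; rewrite -(ler_int rat) ?rmorph0 ?castP -E1; nra.
  + by rewrite -(ltr_int rat) !intrM castP -subr_gt0 -Emu mulr_gt0.
  + rewrite -(ltr_int rat) !intrM intrD rmorph1 castP -subr_gt0.
    have -> : (j%:~R + 1) * q%:R - i%:~R * p%:R = (1 - mu) * q%:R :> rat.
      by rewrite mulrBl Emu; ring.
    by rewrite mulr_gt0 // subr_gt0.
- case=> /andP[j0 jp] h1 h2 E.
  have j0' : 0 <= i%:~R :> rat by rewrite ler0z.
  have jp' : i%:~R <= q%:R :> rat by rewrite -castP ler_int.
  have h1' : j%:~R * q%:R < i%:~R * p%:R :> rat by rewrite -!castP -!intrM ltr_int.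
  have h2' : i%:~R * p%:R < (j + 1)%:~R * q%:R :> rat.
    by rewrite -!castP -!intrM ltr_int.
  rewrite intrD rmorph1 in h2'.
  exists (lam * p%:R - j%:~R).
  rewrite mulr0 addr0 mulr1; split => //; last by ring.
  + apply/andP; split; nra.
  + apply/andP; split; nra.
Qed.

Lemma hits_gy (p q : nat) (i j : int) lam : (0 < p)%N -> (0 < q)%N ->
  hits p q (gy, (i, j)) lam <->
  [/\ 0 <= i + j + 1 <= p + q, i * p < (j+1) * q, j * q < (i+1) * p
    & lam * (p%:R + q%:R) = (i + j + 1)%:~R].
Proof.
move=> hp hq; rewrite /hits /=.
have e1 : i + 1 - i = 1 by ring.
have e2 : j - (j + 1) = -1 by ring.
rewrite e1 e2 rmorphN rmorph1.
have P0 : (0 : rat) < p%:R by rewrite ltr0n.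
have Q0 : (0 : rat) < q%:R by rewrite ltr0n.
rewrite !intrD rmorph1.
split.
- case=> mu [/andP[l0 l1] /andP[m0 m1] E1 E2].
  rewrite mulr1 in E1; rewrite mulrN1 in E2.
  split.
  + apply/andP; split; rewrite -(ler_int rat) ?rmorph0 ?intrD ?rmorph1 ?castP; nra.
  + rewrite -(ltr_int rat) !intrM intrD rmorph1 castP; nra.
  + rewrite -(ltr_int rat) !intrM intrD rmorph1 castP; nra.
  + rewrite mulrDr E1 E2; ring.
- case=> /andP[j0 jp] h1 h2 E.
  have j0' : 0 <= (i + j + 1)%:~R :> rat by rewrite ler0z.
  have jp' : (i + j + 1)%:~R <= p%:R + q%:R :> rat.
    by rewrite -!castP -intrD ler_int.
  have h1' : i%:~R * p%:R < (j + 1)%:~R * q%:R :> rat by rewrite -!castP -!intrM ltr_int.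
  have h2' : j%:~R * q%:R < (i + 1)%:~R * p%:R :> rat.
    by rewrite -!castP -!intrM ltr_int.
  rewrite !intrD !rmorph1 in h1' h2' j0' jp'.
  exists (lam * q%:R - i%:~R).
  rewrite mulr1 mulrN1; split => //.
  + apply/andP; split; nra.
  + apply/andP; split; nra.
  + ring.
  + have : lam * p%:R = i%:~R + j%:~R + 1 - lam * q%:R by rewrite -E; ring.
    move=> ->; ring.
Qed.

Local Open Scope nat_scope.

Lemma winv_nth (u : word) m x0 : (m < size u)%N ->
  nth x0 (winv u) (size u - m.+1) = inv_letter (nth x0 u m).
Proof.
move=> hm; rewrite /winv nth_rev size_map; last by lia.
rewrite (nth_map x0); last by lia.
congr (inv_letter (nth _ _ _)); lia.
Qed.

Lemma sym_nth (u : word) (b c : letter) x0 m : (m < size u)%N ->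
  (nth x0 (u ++ b :: winv u) m = nth x0 u m) /\
  (nth x0 (u ++ c :: winv u) (size u + size u - m) = inv_letter (nth x0 u m)).
Proof.
move=> hm; rewrite !nth_cat hm; split => //.
have -> : (size u + size u - m < size u)%N = false by lia.
have -> : (size u + size u - m - size u)%N = (size u - m.+1).+1 by lia.
by rewrite /= winv_nth.
Qed.

Lemma mid_nth (u : word) (b c : letter) x0 m : m != size u ->
  nth x0 (u ++ b :: winv u) m = nth x0 (u ++ c :: winv u) m.
Proof.
move=> hm; rewrite !nth_cat; case: ifP => // h.
have -> : (m - size u)%N = (m - size u - 1).+1 by lia.
by [].
Qed.

Lemma flipmid (T : eqType) (es : seq T) (F : T -> int) (rf : T -> T) (K : T -> gen) (u : word) (beta : gen) :
  rev es = map rf es -> (forall e, F (rf e) = (- F e)%R) ->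
  map (fun e => (K e, (F e < 0)%R)) es = u ++ (beta, false) :: winv u ->
  map (fun e => (K e, (F e <= 0)%R)) es = u ++ (beta, true) :: winv u.
Proof.
move=> hrev hF hw.
have hs : size es = (size u + size u).+1.
  by rewrite -(size_map (fun e => (K e, (F e < 0)%R))) hw size_cat /= size_rev size_map addnS.
case: es hs hrev hw => [//|e0 es'] hs hrev hw.
set es := e0 :: es' in hs hrev hw *.
have hn : forall m, (m < size es)%N -> nth e0 es (size u + size u - m) = rf (nth e0 es m).
  move=> m hm; rewrite -(nth_map e0 e0 rf hm) -hrev nth_rev //; congr nth; lia.
have hL : forall m, (m < size es)%N ->
    nth (gx, false) (u ++ (beta, false) :: winv u) m = (K (nth e0 es m), (F (nth e0 es m) < 0)%R).
  by move=> m hm; rewrite -hw (nth_map e0).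
apply: (@eq_from_nth _ (gx, false)).
  by rewrite size_map hs size_cat /= size_rev size_map addnS.
move=> m; rewrite size_map => hm; rewrite (nth_map e0) //.
have [emn | nmn] := eqVneq m (size u).
- subst m.
  have hfix : F (nth e0 es (size u)) = 0%R.
    have := hn _ hm; rewrite (_ : (size u + size u - size u = size u)%N); last by lia.
    move=> h; have := hF (nth e0 es (size u)); rewrite -h => h2; lia.
  have := hL _ hm; rewrite nth_cat ltnn subnn /= hfix => -[<-].
  by rewrite nth_cat ltnn subnn /= lexx.
- rewrite -(mid_nth u (beta, false) (beta, true) _ _ nmn).
  have hnz : F (nth e0 es m) != 0%R.
    apply/eqP=> h0.
    wlog hlt : m hm nmn h0 / (m < size u)%N.
      move=> W; case: (ltnP m (size u)) => hmu; first exact: (W m).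
      have hm' : (size u + size u - m < size u)%N by lia.
      apply: (W (size u + size u - m)%N) => //; try lia.
      by rewrite hn // hF h0 oppr0.
    have [s1 _] := sym_nth u (beta, false) (beta, false) (gx, false) _ hlt.
    have [_ s2] := sym_nth u (beta, false) (beta, false) (gx, false) _ hlt.
    have m2 : (size u + size u - m < size es)%N by lia.
    have := hL _ m2; rewrite s2 hn // hF h0 oppr0 ltxx.
    have := hL _ hm; rewrite s1 h0 ltxx.
    by case: (nth (gx, false) u m) => k [] /= -> [].
  rewrite hL // le_eqVlt (negbTE hnz) //.
Qed.

Local Open Scope ring_scope.

Lemma meetsE (p q : nat) e : (0 < p)%N -> (0 < q)%N -> meets p q e <-> mZ p q e.
Proof.
move=> hp hq; have P0 : (0 : rat) < p%:R by rewrite ltr0n.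
have Q0 : (0 : rat) < q%:R by rewrite ltr0n.
case: e => [[] [i j]]; rewrite /meets /= /dt; split.
- by case=> lam /(hits_gx _ _ _ _ _ hp hq) [h1 h2 h3 _]; rewrite h1 /=; lia.
- case/andP=> [/andP[h1 h2] h3]; exists (j%:~R / p%:R); apply/(hits_gx _ _ _ _ _ hp hq).
  split => //; try lia. by rewrite divfK // lt0r_neq0.
- by case=> lam /(hits_gy _ _ _ _ _ hp hq) [h1 h2 h3 _]; rewrite h1 /=; lia.
- case/andP=> [/andP[h1 h2] h3]; exists ((i + j + 1)%:~R / (p%:R + q%:R)); apply/(hits_gy _ _ _ _ _ hp hq).
  split => //; try lia. by rewrite divfK // lt0r_neq0 // addr_gt0.
- by case=> lam /(hits_gz _ _ _ _ _ hp hq) [h1 h2 h3 _]; rewrite h1 /=; lia.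
- case/andP=> [/andP[h1 h2] h3]; exists (i%:~R / q%:R); apply/(hits_gz _ _ _ _ _ hp hq).
  split => //; try lia. by rewrite divfK // lt0r_neq0.
Qed.

Lemma hits_num (p q : nat) e lam : (0 < p)%N -> (0 < q)%N -> hits p q e lam ->
  lam * (den p q e.1)%:~R = (num e)%:~R.
Proof.
move=> hp hq; case: e => [[] [i j]] /=.
- by case/(hits_gx _ _ _ _ _ hp hq).
- by case/(hits_gy _ _ _ _ _ hp hq) => _ _ _ <-; rewrite intrD.
- by case/(hits_gz _ _ _ _ _ hp hq).
Qed.

Lemma ltZ_lam (p q : nat) e1 e2 l1 l2 : (0 < p)%N -> (0 < q)%N ->
  hits p q e1 l1 -> hits p q e2 l2 -> (l1 < l2) = ltZ p q e1 e2.
Proof.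
move=> hp hq h1 h2.
have d1 := @den_pos p q e1.1 (ltac:(lia)) (ltac:(lia)).
have d2 := @den_pos p q e2.1 (ltac:(lia)) (ltac:(lia)).
have E1 := hits_num _ _ _ _ hp hq h1; have E2 := hits_num _ _ _ _ hp hq h2.
rewrite /ltZ -(ltr_int rat) !intrM -E1 -E2.
have d1' : (0 : rat) < (den p q e1.1)%:~R by rewrite ltr0z.
have d2' : (0 : rat) < (den p q e2.1)%:~R by rewrite ltr0z.
move: d1' d2'; set a := (den p q e1.1)%:~R; set b := (den p q e2.1)%:~R => d1' d2'.
have -> : l1 * a * b = l1 * (a * b) by ring.
have -> : l2 * b * a = l2 * (a * b) by ring.
by rewrite ltr_pM2r // mulr_gt0.
Qed.

Lemma letterE (p q : nat) e : edge_letter p q e = (e.1, Dv p q e < 0).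
Proof.
case: e => [[] [i j]]; rewrite /edge_letter /Dv /dt /=; congr (_, _ < 0); ring.
Qed.

Lemma omegaE (p q : nat) W : (0 < p)%N -> (0 < q)%N ->
  is_omega (p, q) W <->
  exists es : seq edge, [/\ forall e, (e \in es) = mZ p q e, pairwise (ltZ p q) es &
     W = map (fun e => (e.1, Dv p q e < 0)) es].
Proof.
move=> hp hq; rewrite /is_omega /=; split.
- case=> es [hm ho hW]; exists es; split.
  + move=> e; apply/idP/idP => [/hm /(meetsE _ _ _ hp hq) //| /(meetsE _ _ _ hp hq) /hm //].
  + apply/(pairwiseP (gx, (0, 0))) => i j hi hj hij.
    have [li hli] : meets p q (nth (gx, (0, 0)) es i) by apply/hm/mem_nth.
    have [lj hlj] : meets p q (nth (gx, (0, 0)) es j) by apply/hm/mem_nth.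
    rewrite -(ltZ_lam _ _ _ _ _ _ hp hq hli hlj); apply: (ho i j li lj (gx, (0, 0)) _ hli hlj).
    by rewrite hij.
  + by rewrite hW; apply: eq_map => e; rewrite letterE.
- case=> es [hm ho hW]; exists es; split.
  + by move=> e; rewrite hm (meetsE _ _ _ hp hq).
  + move=> i j li lj e0 /andP[hij hj] hli hlj.
    rewrite (ltZ_lam _ _ _ _ _ _ hp hq hli hlj).
    have hi : (i < size es)%N by lia.
    have Hp := (pairwiseP e0 ho).
    by apply: Hp => //.
  + by rewrite hW; apply: eq_map => e; rewrite letterE.
Qed.

Local Open Scope ring_scope.

Lemma rev_refl (A B : int) (es : seq edge) : 0 < A -> 0 < B ->
  (forall e, (e \in es) = mZ A B e) -> pairwise (ltZ A B) es ->
  rev es = map (refl A B) es.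
Proof.
move=> hA hB hm hp.
have tr := ltZ_trans _ _ hA hB.
have hs : sorted (ltZ A B) es by rewrite (sorted_pairwise tr).
apply: (@irr_sorted_eq _ (fun x y => ltZ A B y x)).
- by move=> y x z h1 h2; exact: tr h2 h1.
- by move=> x; exact: ltZ_irr.
- by rewrite rev_sorted.
- rewrite sorted_map; apply: sub_sorted hs => x y /=.
  by rewrite ltZ_refl.
- move=> x; rewrite mem_rev -{2}(reflK A B x) (mem_map (can_inj (reflK A B))).
  by rewrite !hm mZ_refl.
Qed.

Definition midl (A B D : int) : seq edge :=
  (if 1 <= A then [:: (gx, (B-1, A))] else [::]) ++
  (gy, (B-1, A)) :: (if 1 <= D then [:: (gz, (B, A))] else [::]).

Lemma mem_midl (A B D : int) e : (e \in midl A B D) = inmid A B D e.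
Proof.
case: e => [k [i j]]; rewrite /midl /inmid mem_cat.
case: (1 <= A); case: (1 <= D); case: k; rewrite !inE /= ?xpair_eqE //=;
  by rewrite ?orbF ?andbF.
Qed.

Lemma pw_midl (A B C D : int) : fcond A B C D ->
  pairwise (ltZ (A+C) (B+D)) (midl A B D).
Proof.
case=> hA hB hC hD H.
rewrite /midl; case: (1 <= A); case: (1 <= D); rewrite /= /ltZ /= ?andbT; nia.
Qed.

Lemma frac_lt2 (n1 d1 n2 d2 a b c e : int) : 0 < d1 -> 0 < d2 -> 0 < b -> 0 < e ->
  n1 * b <= a * d1 -> a * e <= c * b -> c * d2 < n2 * e -> n1 * d2 < n2 * d1.
Proof.
move=> h1 h2 hb he k1 k2 k3.
have s1 : (n1 * b) * (e * d2) <= (a * d1) * (e * d2) by rewrite ler_pM2r ?mulr_gt0.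
have s2 : (a * e) * (d1 * d2) <= (c * b) * (d1 * d2) by rewrite ler_pM2r ?mulr_gt0.
have s3 : (c * d2) * (b * d1) < (n2 * e) * (b * d1) by rewrite ltr_pM2r ?mulr_gt0.
have : (n1 * d2) * (b * e) < (n2 * d1) * (b * e).
  have -> : (n1 * d2) * (b * e) = (n1 * b) * (e * d2) by ring.
  have -> : (n2 * d1) * (b * e) = (n2 * e) * (b * d1) by ring.
  have E1 : (a * d1) * (e * d2) = (a * e) * (d1 * d2) by ring.
  have E2 : (c * b) * (d1 * d2) = (c * d2) * (b * d1) by ring.
  rewrite E1 in s1; rewrite E2 in s2.
  exact: (le_lt_trans s1 (le_lt_trans s2 s3)).
by rewrite ltr_pM2r ?mulr_gt0.
Qed.

Lemma assemble (A B C D : int) (Rl Sl : seq edge) : fcond A B C D ->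
  (forall e, (e \in Rl) = mZ (A+C) (B+D) e && cutL (A+C) (B+D) A e) ->
  (forall e, (e \in Sl) = mZ (A+C) (B+D) e && cutR (A+C) (B+D) B e) ->
  pairwise (ltZ (A+C) (B+D)) Rl -> pairwise (ltZ (A+C) (B+D)) Sl ->
  (forall e, (e \in Rl ++ midl A B D ++ Sl) = mZ (A+C) (B+D) e) /\
  pairwise (ltZ (A+C) (B+D)) (Rl ++ midl A B D ++ Sl).
Proof.
move=> F hR hS pR pS; have F' := F; case: F' => hA hB hC hD H.
have hP : 0 < A + C by nia.
have hQ : 0 < B + D by nia.
split.
- move=> e; rewrite (mem_cat e Rl) (mem_cat e (midl A B D)) hR hS mem_midl -(Mid _ _ _ _ _ F).
  by case: (mZ _ _ e); case: (cutL _ _ _ e); case: (cutR _ _ _ e).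
rewrite pairwise_cat (pairwise_cat _ (midl A B D)) pR pS (pw_midl _ _ _ _ F) allrel_catr /= !andbT.
have dp := fun k => @den_pos (A + C) (B + D) k hP hQ.
apply/andP; split; first (apply/andP; split).
- apply/allrelP => x y; rewrite hR mem_midl -(Mid _ _ _ _ _ F) /cutL /cutR /ltZ.
  case/andP=> _ h1 /andP[/andP[_ h2] _].
  apply: (frac_lt _ _ _ _ _ _ _ _ (dp x.1) (dp y.1) hP hP h1); [exact: lexx | by rewrite leNgt].
- apply/allrelP => x y; rewrite hR hS /cutL /cutR /ltZ.
  case/andP=> _ h1 /andP[_ h2].
  apply: (frac_lt _ _ _ _ _ _ B (B + D) (dp x.1) (dp y.1) hP hQ h1); [nia | exact: ltW].
- apply/allrelP => x y; rewrite hS mem_midl -(Mid _ _ _ _ _ F) /cutL /cutR /ltZ.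
  case/andP=> [/andP[_ _] h1] /andP[_ h2].
  apply: (frac_lt2 _ _ _ _ _ _ B (B + D) (dp x.1) (dp y.1) hQ hQ _ (lexx _) h2).
  by rewrite leNgt.
Qed.

Local Open Scope ring_scope.

Lemma R0 (P Q : int) e : 0 < P -> 0 < Q -> mZ P Q e -> cutL P Q 0 e = false.
Proof.
move=> hP hQ h; have := num_range _ _ _ hP hQ h; rewrite /cutL mul0r => /andP[h1 _].
apply/negbTE; rewrite -leNgt; apply: mulr_ge0; lia.
Qed.

Lemma S0 (A B C D : int) e : D = 0 -> fcond A B C D -> mZ (A+C) (B+D) e -> cutR (A+C) (B+D) B e = false.
Proof.
move=> ->; case=> hA hB hC _ H h.
rewrite mulr0 subr0 in H.
have hC1 : 1 <= C by nia.
have hB1 : 1 <= B by nia.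
have hB2 : B <= 1 by nia.
have {hB1 hB2} hB1 : B = 1 by lia.
subst B; have := num_range (A + C) (1 + 0) e (ltac:(lia)) (ltac:(lia)) h.
rewrite /cutR addr0 mul1r mulr1 => /andP[_ h1]; apply/negbTE; rewrite -leNgt; exact: ltW.
Qed.

Definition unshift (B A : int) (e : edge) : edge := (e.1, (e.2.1 - B, e.2.2 - A)).
Lemma shiftK B A : cancel (shift B A) (unshift B A).
Proof. by case=> k [i j]; rewrite /shift /unshift /=; congr (_, (_, _)); ring. Qed.
Lemma unshiftK B A : cancel (unshift B A) (shift B A).
Proof. by case=> k [i j]; rewrite /shift /unshift /=; congr (_, (_, _)); ring. Qed.

Lemma Rpart (A B C D : int) (es : seq edge) : fcond A B C D -> 1 <= A ->
  (forall e, (e \in es) = mZ A B e) -> pairwise (ltZ A B) es ->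
  (forall e, (e \in es) = mZ (A+C) (B+D) e && cutL (A+C) (B+D) A e) /\
  pairwise (ltZ (A+C) (B+D)) es.
Proof.
move=> F hA1 hm hp; split.
- by move=> e; rewrite hm (R1 _ _ _ _ _ F hA1).
- apply: (sub_in_pairwise (P := mem es)) hp; last by apply/allP.
  move=> x y hx hy; apply: (Rord _ _ _ _ _ _ F hA1); by rewrite -hm.
Qed.

Lemma Spart (A B C D : int) (es : seq edge) : fcond A B C D -> 1 <= D ->
  (forall e, (e \in es) = mZ C D e) -> pairwise (ltZ C D) es ->
  (forall e, (e \in map (shift B A) es) = mZ (A+C) (B+D) e && cutR (A+C) (B+D) B e) /\
  pairwise (ltZ (A+C) (B+D)) (map (shift B A) es).
Proof.
move=> F hD1 hm hp; split.
- move=> e; rewrite -{1}(unshiftK B A e) (mem_map (can_inj (shiftK B A))) hm.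
  by rewrite (S1 _ _ _ _ _ F hD1) unshiftK.
- rewrite pairwise_map.
  apply: (sub_in_pairwise (P := mem es)) hp; last by apply/allP.
  move=> x y hx hy; apply: (Sord _ _ _ _ _ _ F hD1); by rewrite -hm.
Qed.

Lemma Rword (A B C D P Q : int) (es : seq edge) (u : word) (beta : gen) :
  P = A + C -> Q = B + D -> fcond A B C D -> 1 <= A ->
  (forall e, (e \in es) = mZ A B e) -> pairwise (ltZ A B) es ->
  map (fun e => (e.1, Dv A B e < 0)) es = u ++ (beta, false) :: winv u ->
  map (fun e => (e.1, Dv P Q e < 0)) es = u ++ (beta, true) :: winv u.
Proof.
move=> -> -> F hA1 hm hp hw; have F' := F; case: F' => hA hB hC hD H.
have hrev : rev es = map (refl A B) es by apply: rev_refl => //; nia.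
rewrite -(flipmid _ es (Dv A B) (refl A B) (fun e => e.1) u beta hrev (Dv_refl A B) hw).
apply/eq_in_map => e he; congr (_, _); apply: (Rlet _ _ _ _ _ F hA1); by rewrite -hm.
Qed.

Lemma Sword (A B C D P Q : int) (es : seq edge) (u : word) (beta : gen) :
  P = A + C -> Q = B + D -> fcond A B C D -> 1 <= D ->
  (forall e, (e \in es) = mZ C D e) -> pairwise (ltZ C D) es ->
  map (fun e => (e.1, Dv C D e < 0)) es = u ++ (beta, false) :: winv u ->
  map (fun e => (e.1, Dv P Q e < 0)) (map (shift B A) es) = u ++ (beta, true) :: winv u.
Proof.
move=> -> -> F hD1 hm hp hw; have F' := F; case: F' => hA hB hC hD H.
have hrev : rev es = map (refl C D) es by apply: rev_refl => //; nia.
rewrite -map_comp -(flipmid _ es (Dv C D) (refl C D) (fun e => e.1) u beta hrev (Dv_refl C D) hw).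
apply/eq_in_map => e he /=; congr (_, _); apply: (Slet _ _ _ _ _ F hD1); by rewrite -hm.
Qed.

Lemma farey_inv path : let v := farey_at path in
  v.1.2 = mediant v.1.1 v.2 /\ (v.1.1.2 * v.2.1 = v.1.1.1 * v.2.2 + 1)%N.
Proof.
rewrite /farey_at.
have : (farey_root.1.2 = mediant farey_root.1.1 farey_root.2 /\
   (farey_root.1.1.2 * farey_root.2.1 = farey_root.1.1.1 * farey_root.2.2 + 1)%N) by [].
elim: path farey_root => [//|b path IH] v Hv /=; apply: IH.
case: v Hv => [[r t] s] /= [-> Hd]; case: b => /=.
- rewrite /mediant /=; split => //; lia.
- rewrite /mediant /=; split => //; lia.
Qed.

Local Open Scope ring_scope.

Lemma midl_word (A B C D P Q : int) : P = A + C -> Q = B + D -> fcond A B C D ->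
  map (fun e => (e.1, Dv P Q e < 0)) (midl A B D) =
  map (fun e => (e.1, false)) (midl A B D).
Proof.
move=> -> -> F; apply/eq_in_map => e; rewrite mem_midl => h.
by rewrite (Mlet _ _ _ _ _ F h).
Qed.

Lemma fcond_nat (a b c d : nat) : (b * c = a * d + 1)%N -> fcond a b c d.
Proof. move=> H; split; lia. Qed.

Theorem proposition3p9 (r t s : fracp)
  (Hv : is_farey_vertex (r, t, s)) (Ht : (0 < t.1)%N /\ (0 < t.2)%N) :
  [/\
    (* (1) *)
    (r = (0, 1)%N -> s <> (1, 0)%N ->
      forall (w : word) (alpha : gen),
        is_omega s (w ++ (alpha, false) :: winv w) ->
        is_omega t ([:: (gy, false); (gz, false)] ++ w ++ (alpha, true) :: winv w)),
    (* (2) *)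
    (r <> (0, 1)%N -> s = (1, 0)%N ->
      forall (u : word) (beta : gen),
        is_omega r (u ++ (beta, false) :: winv u) ->
        is_omega t ((u ++ (beta, true) :: winv u) ++ [:: (gx, false); (gy, false)]))
  & (* (3) *)
    (r <> (0, 1)%N -> s <> (1, 0)%N ->
      forall (u w : word) (alpha beta : gen),
        is_omega r (u ++ (beta, false) :: winv u) ->
        is_omega s (w ++ (alpha, false) :: winv w) ->
        is_omega t ((u ++ (beta, true) :: winv u)
                    ++ [:: (gx, false); (gy, false); (gz, false)]
                    ++ (w ++ (alpha, true) :: winv w)))].
Proof.
case: Hv => path Hp.
have := farey_inv path; rewrite Hp /= => -[Et Hd].
move: Ht; rewrite Et {Et Hp t}.
case: r Hd => a b; case: s => c d /= Hd _.
have F := fcond_nat _ _ _ _ Hd.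
have hb : (0 < b)%N by nia.
have hc : (0 < c)%N by nia.
split.
- case=> ??; subst a b => Es w alpha Hs.
  have c1 : c = 1%N by nia.
  subst c.
  have hd : (0 < d)%N by case: d Es {Hd F Hs} => // _; case.
  have [es [hm hp hw]] := (omegaE 1 d _ (ltac:(lia)) hd).1 Hs.
  apply/(omegaE (0 + 1) (1 + d)); [lia | lia |].
  have [Sm Sp] := Spart 0 1 1 d es F (ltac:(lia)) hm hp.
  have R0' : forall e, (e \in [::]) = mZ (0 + 1) (1 + d) e && cutL (0 + 1) (1 + d) 0 e.
    move=> e; rewrite in_nil; case h : (mZ _ _ e) => //=.
    by rewrite R0 //; lia.
  have [Am Ap] := assemble 0 1 1 d [::] (map (shift 1 0) es) F R0' Sm (erefl true) Sp.
  exists ([::] ++ midl 0 1 d ++ map (shift 1 0) es); split => //.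
  rewrite !map_cat (midl_word _ _ _ _ _ _ (erefl _) (erefl _) F) (Sword _ _ _ _ _ _ _ _ _ (erefl _) (erefl _) F (ltac:(lia)) hm hp (esym hw)).
  rewrite /midl; have -> : (1 <= 0 :> int) = false by [].
  have -> : (1 <= d :> int) = true by lia.
  by [].
- move=> Er Es u beta Hr; case: Es => Ec Ed.
  have b1 : b = 1%N by subst c d; nia.
  have ha : (0 < a)%N.
    case: (posnP a) => // a0; exfalso; apply: Er; by rewrite a0 b1.
  have hd1 : (1 <= d%:Z) = false by rewrite Ed.
  have [es [hm hp hw]] := (omegaE a b _ ha hb).1 Hr.
  apply/(omegaE (a + c) (b + d)); [lia | lia |].
  rewrite !PoszD.
  have [Rm Rp] := Rpart a b c d es F (ltac:(lia)) hm hp.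
  have S0' : forall e, (e \in [::]) = mZ (a%:Z + c) (b%:Z + d) e && cutR (a%:Z + c) (b%:Z + d) b e.
    move=> e; rewrite in_nil; case h : (mZ _ _ e) => //=.
    have d0 : d%:Z = 0 by rewrite Ed.
    by rewrite (S0 _ _ _ _ _ d0 F h).
  have [Am Ap] := assemble a b c d es [::] F Rm S0' Rp (erefl true).
  exists (es ++ midl a b d ++ [::]); split => //.
  rewrite map_cat (map_cat _ (midl _ _ _)) (midl_word _ _ _ _ _ _ (erefl _) (erefl _) F).
  rewrite (Rword _ _ _ _ _ _ _ _ _ (erefl _) (erefl _) F (ltac:(lia)) hm hp (esym hw)).
  rewrite /midl hd1; have -> : (1 <= a :> int) = true by lia.
  by rewrite cats0.
- move=> Er Es u w alpha beta Hr Hs.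
  have ha : (0 < a)%N.
    case: (posnP a) => // a0; exfalso; apply: Er; rewrite a0.
    have b1 : b = 1%N by subst a; nia.
    by rewrite b1.
  have hd : (0 < d)%N.
    case: (posnP d) => // d0; exfalso; apply: Es; rewrite d0.
    have c1 : c = 1%N by subst d; nia.
    by rewrite c1.
  have [es [hm hp hw]] := (omegaE a b _ ha hb).1 Hr.
  have [fs [hm' hp' hw']] := (omegaE c d _ hc hd).1 Hs.
  apply/(omegaE (a + c) (b + d)); [lia | lia |].
  rewrite !PoszD.
  have [Rm Rp] := Rpart a b c d es F (ltac:(lia)) hm hp.
  have [Sm Sp] := Spart a b c d fs F (ltac:(lia)) hm' hp'.
  have [Am Ap] := assemble a b c d es (map (shift b a) fs) F Rm Sm Rp Sp.
  exists (es ++ midl a b d ++ map (shift b a) fs); split => //.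
  rewrite map_cat (map_cat _ (midl _ _ _)) (midl_word _ _ _ _ _ _ (erefl _) (erefl _) F) (Rword _ _ _ _ _ _ _ _ _ (erefl _) (erefl _) F (ltac:(lia)) hm hp (esym hw)).
  rewrite (Sword _ _ _ _ _ _ _ _ _ (erefl _) (erefl _) F (ltac:(lia)) hm' hp' (esym hw')).
  rewrite /midl; have -> : (1 <= a :> int) = true by lia.
  have -> : (1 <= d :> int) = true by lia.
  by [].
Qed.
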